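(* (i) If $(b_0,\dots,b_{m+1})\in X_m(\mathbb C)$ (indices of $b$ taken modulo $m+2$), then $T_i(k):=P_i(b_{\frac{k-i}{2}},\dots,b_{\frac{k+i-2}{2}})$ defines a solution of the $T$-system of level $m$, and for generic $(b_j)$ this solution is nonvanishing. (ii) Every nonvanishing solution of the $T$-system of level $m$ is of this form for a unique $(b_0,\dots,b_{m+1})\in X_m(\mathbb C)$.
   Context: Let $m\ge1$, $J=\begin{pmatrix} i&0\\1&i\end{pmatrix}$, $B(b)=\begin{pmatrix}1&b\\0&-1\end{pmatrix}$. $X_m\subset\mathbb A^{m+2}$ (coordinates $b_0,\dots,b_{m+1}$) is cut out by $B(b_0)JB(b_1)J\cdots B(b_{m+1})J=-1$. The polynomials $P_r$ are defined by $P_0=1$, $P_1(b_1)=b_1$, $P_r(b_1,\dots,b_r)=P_{r-1}(b_1,\dots,b_{r-1})b_r-P_{r-2}(b_1,\dots,b_{r-2})$; $P_i(a_1,\dots,a_i)$ denotes $P_i$ evaluated at the listed $i$ arguments. A solution of the $T$-system of level $m$ is a collection of complex numbers $T_i(k)$, $0\le i\le m$, $k\in\mathbb Z$, $i+k$ even, with $T_0(k)=T_m(k)=1$ for all $k$ and $T_i(k-1)T_i(k+1)=T_{i-1}(k)T_{i+1}(k)+1$ for $1\le i\le m-1$; it is nonvanishing if all $T_i(k)\neq0$. *)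

(* Defs.v *)
From HB Require Import structures.
From mathcomp Require Import all_boot all_order all_algebra.
From mathcomp Require Import complex.

From mathcomp Require Import mpoly.
From mathcomp Require Import reals.
Set Implicit Arguments. Unset Strict Implicit. Unset Printing Implicit Defensive.
Import Order.TTheory GRing.Theory Num.Theory.
Local Open Scope ring_scope.

Section Defs.
Variable R : realType.
Local Notation C := (R[i]).

Definition Jmat : 'M[C]_2 :=
  \matrix_(r < 2, c < 2)
    (if (r == 0 :> nat) && (c == 0 :> nat) then 'i%C
     else if (r == 1 :> nat) && (c == 0 :> nat) then 1
     else if (r == 1 :> nat) && (c == 1 :> nat) then 'i%C else 0).

Definition Bmat (b : C) : 'M[C]_2 :=
  \matrix_(r < 2, c < 2)
    (if (r == 0 :> nat) && (c == 0 :> nat) then 1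
     else if (r == 0 :> nat) && (c == 1 :> nat) then b
     else if (r == 1 :> nat) && (c == 1 :> nat) then -1 else 0).

Definition inX (m : nat) (b : 'I_m.+2 -> C) : Prop :=
  \prod_(j < m.+2) (Bmat (b j) * Jmat) = - 1.

(* P_r(a_1,...,a_r), with the arguments given as a function a : nat -> C
   (only a 1, ..., a r are used). *)
Fixpoint Pc (a : nat -> C) (r : nat) : C :=
  match r with
  | 0 => 1
  | r1.+1 => match r1 with
             | 0 => a 1%N
             | r2.+1 => Pc a r1 * a r - Pc a r2
             end
  end.

Definition bmod (m : nat) (b : 'I_m.+2 -> C) (n : int) : C :=
  b (inord `|(n %% (m.+2)%:Z)%Z|%N).

Definition Tof (m : nat) (b : 'I_m.+2 -> C) (i : nat) (k : int) : C :=
  Pc (fun j : nat => bmod b (((k - i%:Z) %/ 2)%Z + j%:Z - 1)) i.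

Definition evenik (i : nat) (k : int) : bool := (2 %| (i%:Z + k))%Z.

(* T : nat -> int -> C is a solution of the T-system of level m
   (values outside 0 <= i <= m, i+k even, are irrelevant). *)
Definition Tsystem (m : nat) (T : nat -> int -> C) : Prop :=
  (forall k : int, evenik 0 k -> T 0%N k = 1) /\
  (forall k : int, evenik m k -> T m k = 1) /\
  (forall (i : nat) (k : int), (1 <= i)%N -> (i <= m - 1)%N -> evenik i.+1 k ->
     T i (k - 1) * T i (k + 1) = T i.-1 k * T i.+1 k + 1).

Definition nonvanishing (m : nat) (T : nat -> int -> C) : Prop :=
  forall (i : nat) (k : int), (i <= m)%N -> evenik i k -> T i k != 0.

Definition Tagree (m : nat) (T T' : nat -> int -> C) : Prop :=
  forall (i : nat) (k : int), (i <= m)%N -> evenik i k -> T i k = T' i k.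

(* "for generic b in X_m": there is a dense (Zariski) open subset of X_m,
   given as the principal open {f <> 0} of X_m which is Zariski-dense in X_m
   (every polynomial vanishing on it vanishes on all of X_m), on which P holds. *)
Definition generic_on_X (m : nat) (P : ('I_m.+2 -> C) -> Prop) : Prop :=
  exists f : {mpoly C[m.+2]},
    (forall g : {mpoly C[m.+2]},
        (forall b, inX b -> f.@[b] != 0 -> g.@[b] = 0) ->
        forall b, inX b -> g.@[b] = 0) /\
    (forall b, inX b -> f.@[b] != 0 -> P b).

End Defs.

(* Main.v *)
Require Import Defs.
From HB Require Import structures.
From mathcomp Require Import all_boot all_order all_algebra.
From mathcomp Require Import complex.
From mathcomp Require Import mpoly.
From mathcomp Require Import reals.
From mathcomp Require Import ring zify.
From mathcomp Require Import cyclic separable cyclotomic.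
Set Implicit Arguments. Unset Strict Implicit. Unset Printing Implicit Defensive.
Import Order.TTheory GRing.Theory Num.Theory.
Local Open Scope ring_scope.

Section Cont.
Variable R : comNzRingType.

Fixpoint Q (a : int -> R) (s : int) (n : nat) : R :=
  match n with
  | 0 => 0
  | 1 => 1
  | S ((S n2) as n1) => Q a s n1 * a (s + n2%:Z) - Q a s n2
  end.

Lemma QSS a s n : Q a s n.+2 = Q a s n.+1 * a (s + n%:Z) - Q a s n.
Proof. by []. Qed.

Lemma Q_ext a a' s n : (forall k : nat, (k.+1 < n)%N -> a (s + k%:Z) = a' (s + k%:Z)) ->
  Q a s n = Q a' s n.
Proof.
move=> H.
suff G : forall n, (forall k : nat, (k < n)%N -> a (s + k%:Z) = a' (s + k%:Z)) ->
   Q a s n.+1 = Q a' s n.+1 /\ Q a s n = Q a' s n.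
  case: n H => [|n] H; first by [].
  by case: (G n) => // k hk; apply: H; lia.
elim=> [|n0 IH] H'; first by [].
have [h1 h2] := IH (fun k hk => H' k (leq_trans hk (leqnSn n0))).
split=> //; rewrite QSS h1 h2 H' //.
Qed.

Lemma Q_shift a j s n : Q (fun p => a (p + j)) s n = Q a (s + j) n.
Proof.
suff: Q (fun p => a (p + j)) s n = Q a (s + j) n /\
      Q (fun p => a (p + j)) s n.+1 = Q a (s + j) n.+1 by case.
elim: n => [|n [h1 h2]]; first by [].
split=> //; rewrite QSS QSS h1 h2; congr (_ * a _ - _); ring.
Qed.

Lemma Q_desnanot a s n :
  Q a s n.+1 * Q a (s+1) n.+1 = Q a s n.+2 * Q a (s+1) n + 1.
Proof.
elim: n => [|n IH]; first by rewrite /= mulr0 add0r mulr1.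
rewrite (QSS a (s+1)) (QSS a s n.+1).
have -> : s + 1 + n%:Z = s + n.+1%:Z by lia.
move: IH; set x := a _; set A := Q a s n.+1; set B := Q a (s+1) n.+1;
  set Cc := Q a s n.+2; set D := Q a (s+1) n => IH.
apply/eqP; rewrite -subr_eq0.
have -> : Cc * (B * x - D) - ((Cc * x - A) * B + 1) = A * B - (Cc * D + 1) by ring.
by rewrite IH subrr.
Qed.

Lemma Q_left a s n : Q a s n.+2 = a s * Q a (s+1) n.+1 - Q a (s+2) n.
Proof.
suff: Q a s n.+2 = a s * Q a (s+1) n.+1 - Q a (s+2) n /\
      Q a s n.+3 = a s * Q a (s+1) n.+2 - Q a (s+2) n.+1 by case.
elim: n => [|n [h1 h2]].
  by rewrite /= !addr0; split; ring.
split=> //.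
rewrite (QSS a s n.+2) h1 h2 (QSS a (s+1) n.+1) (QSS a (s+2) n).
have -> : s + 1 + n.+1%:Z = s + n.+2%:Z by lia.
have -> : s + 2 + n%:Z = s + n.+2%:Z by lia.
ring.
Qed.

Definition mk2 (x y z w : R) : 'M[R]_2 :=
  \matrix_(i < 2, j < 2) if i == ord0 then (if j == ord0 then x else y)
                         else (if j == ord0 then z else w).

Lemma mk2_mul x y z w x' y' z' w' :
  mk2 x y z w * mk2 x' y' z' w' =
  mk2 (x * x' + y * z') (x * y' + y * w') (z * x' + w * z') (z * y' + w * w').
Proof.
apply/matrixP => i j; rewrite !mxE !big_ord_recr big_ord0 /= !mxE add0r.
by case: i => [[|[|//]] ?]; case: j => [[|[|//]] ?].
Qed.

Lemma mk2_one : mk2 1 0 0 1 = 1.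
Proof.
by apply/matrixP => i j; rewrite !mxE; case: i => [[|[|//]] ?]; case: j => [[|[|//]] ?].
Qed.

Lemma mk2_opp x y z w : - mk2 x y z w = mk2 (-x) (-y) (-z) (-w).
Proof.
by apply/matrixP => i j; rewrite !mxE; case: i => [[|[|//]] ?]; case: j => [[|[|//]] ?].
Qed.

Lemma mk2_inj x y z w x' y' z' w' : mk2 x y z w = mk2 x' y' z' w' ->
  [/\ x = x', y = y', z = z' & w = w'].
Proof.
move=> /matrixP H.
have := H ord0 ord0; have := H ord0 ord_max; have := H ord_max ord0; have := H ord_max ord_max.
by rewrite !mxE /=.
Qed.

Definition Nm (x : R) := mk2 x 1 (-1) 0.

Lemma prod_Nm a s n : \prod_(t < n.+1) Nm (a (s + t%:Z)) =
  mk2 (Q a s n.+2) (Q a s n.+1) (- Q a (s+1) n.+1) (- Q a (s+1) n).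
Proof.
elim: n => [|n IH].
  rewrite big_ord1 /Nm /= addr0 !mul1r subr0; congr mk2; by rewrite oppr0.
rewrite big_ord_recr IH.
change (mk2 (Q a s n.+2) (Q a s n.+1) (- Q a (s + 1) n.+1) (- Q a (s + 1) n) * Nm (a (s + n.+1%:Z)) =
  mk2 (Q a s n.+3) (Q a s n.+2) (- Q a (s + 1) n.+2) (- Q a (s + 1) n.+1)).
rewrite /Nm mk2_mul (QSS a s n.+1) (QSS a (s+1) n).
have -> : s + 1 + n%:Z = s + n.+1%:Z by lia.
congr mk2; ring.
Qed.

End Cont.

Lemma Q_morph (R S : comNzRingType) (f : {rmorphism R -> S}) a s n :
  f (Q a s n) = Q (fun p => f (a p)) s n.
Proof.
suff: f (Q a s n) = Q (fun p => f (a p)) s n /\ f (Q a s n.+1) = Q (fun p => f (a p)) s n.+1 by case.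
elim: n => [|n [h1 h2]]; first by rewrite rmorph0 rmorph1.
by split=> //; rewrite QSS rmorphB rmorphM h1 h2.
Qed.


Section CX.
Variable R : realType.
Local Notation C := (R[i]).
Variable n : nat.
Local Notation N := n.+3.

Lemma Bmat_mk2 (x : C) : Bmat x = mk2 1 x 0 (-1).
Proof.
by apply/matrixP => i j; rewrite !mxE; case: i => [[|[|//]] ?]; case: j => [[|[|//]] ?].
Qed.

Lemma Jmat_mk2 : Jmat R = mk2 'i%C 0 1 'i%C.
Proof.
by apply/matrixP => i j; rewrite !mxE; case: i => [[|[|//]] ?]; case: j => [[|[|//]] ?].
Qed.

Definition Um : 'M[C]_2 := mk2 1 (- 'i%C) 0 1.
Definition Ui : 'M[C]_2 := mk2 1 'i%C 0 1.

Lemma UiUm : Ui * Um = 1.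
Proof. by rewrite /Ui /Um mk2_mul -mk2_one; congr mk2; ring. Qed.
Lemma UmUi : Um * Ui = 1.
Proof. by rewrite /Ui /Um mk2_mul -mk2_one; congr mk2; ring. Qed.

Lemma BJ_conj (x : C) : Bmat x * Jmat R = Um * Nm x * Ui.
Proof.
rewrite Bmat_mk2 Jmat_mk2 /Um /Ui /Nm !mk2_mul; congr mk2; try ring.
have h0 : 'i%C * 'i%C + 1 = 0 :> C by rewrite -expr2 sqr_i addNr.
match goal with |- ?L = ?Rr =>
  first [have e : L = Rr - ('i%C * 'i%C + 1) by ring | have e : L = Rr + ('i%C * 'i%C + 1) by ring] end;
by rewrite e h0 ?subr0 ?addr0.
Qed.

Lemma prod_conj k (F : 'I_k -> 'M[C]_2) :
  \prod_(j < k) (Um * F j * Ui) = Um * (\prod_(j < k) F j) * Ui.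
Proof.
elim: k F => [|k IH] F; first by rewrite !big_ord0 mulr1 UmUi.
rewrite !big_ord_recr /= IH !mulrA -(mulrA (Um * _) Ui Um) UiUm mulr1.
by rewrite -!mulrA.
Qed.

Lemma inX_iff (b : 'I_N -> C) : inX b <-> \prod_(j < N) Nm (b j) = -1.
Proof.
rewrite /inX (eq_bigr _ (fun j _ => BJ_conj (b j))) prod_conj.
split=> H.
  have := congr1 (fun M => Ui * M * Um) H.
  by rewrite /= !mulrA UiUm mul1r -mulrA UiUm mulr1 mulrN1 mulNr UiUm.
by rewrite H mulrN1 mulNr UmUi.
Qed.

Definition Pr (a : int -> C) (j : int) := \prod_(t < N) Nm (a (j + t%:Z)).

Lemma bmodE (b : 'I_N -> C) (r : 'I_N) : bmod b r%:Z = b r.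
Proof.
rewrite /bmod modz_nat /= modn_small //.
by congr b; apply: val_inj; rewrite /= inordK.
Qed.

Lemma bmod_mod (b : 'I_N -> C) x : bmod b (x %% N%:Z)%Z = bmod b x.
Proof. by rewrite /bmod modz_mod. Qed.

Lemma bmod_per (b : 'I_N -> C) x : bmod b (x + N%:Z) = bmod b x.
Proof. by rewrite /bmod modzDr. Qed.

Lemma bmod_shift (b : 'I_N -> C) x t : bmod b ((x %% N%:Z)%Z + t) = bmod b (x + t).
Proof. by rewrite -bmod_mod modzDml bmod_mod. Qed.

Lemma inX_Pr (b : 'I_N -> C) : inX b <-> Pr (bmod b) 0 = -1.
Proof.
rewrite inX_iff /Pr; suff -> : \prod_(t < N) Nm (bmod b (0 + t%:Z)) = \prod_(j < N) Nm (b j) by [].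
by apply: eq_bigr => t _; rewrite add0r bmodE.
Qed.

Definition Ninv (x : C) := mk2 0 (-1) 1 x.
Lemma NinvN x : Ninv x * Nm x = 1.
Proof. by rewrite /Ninv /Nm mk2_mul -mk2_one; congr mk2; ring. Qed.

Lemma Pr_rot a j : Pr a j = -1 -> a (j + N%:Z) = a j -> Pr a (j + 1) = -1.
Proof.
move=> H per.
have E : \prod_(t < N.+1) Nm (a (j + t%:Z)) = Nm (a j) * Pr a (j + 1).
  rewrite big_ord_recl /= addr0 /Pr; congr (_ * _); apply: eq_bigr => t _.
  by rewrite /bump /=; congr (Nm (a _)); lia.
have E2 : \prod_(t < N.+1) Nm (a (j + t%:Z)) = Pr a j * Nm (a j).
  by rewrite big_ord_recr /= per.
have := congr1 (fun M => Ninv (a j) * M) (etrans (esym E) E2).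
by rewrite /= H mulrA NinvN mul1r mulN1r mulrN NinvN.
Qed.

Lemma Pr_all (b : 'I_N -> C) : inX b -> forall j, Pr (bmod b) j = -1.
Proof.
move=> /inX_Pr H0 j.
have -> : Pr (bmod b) j = Pr (bmod b) (j %% N%:Z)%Z.
  by apply: eq_bigr => t _; rewrite bmod_shift.
have : (0 <= (j %% N%:Z)%Z) by rewrite modz_ge0.
case: (j %% N%:Z)%Z => [k|//] _.
elim: k => [//|k IH].
have -> : Posz k.+1 = Posz k + 1 by lia.
apply: Pr_rot => //; exact: bmod_per.
Qed.

Lemma mk2_N1 : -1 = mk2 (-1) 0 0 (-1) :> 'M[C]_2.
Proof. by rewrite -mk2_one mk2_opp oppr0. Qed.

Lemma Pr_mk2 a j : Pr a j =
  mk2 (Q a j n.+4) (Q a j n.+3) (- Q a (j+1) n.+3) (- Q a (j+1) n.+2).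
Proof. exact: prod_Nm. Qed.

Lemma X_Q (b : 'I_N -> C) : inX b -> forall s,
  Q (bmod b) s n.+3 = 0 /\ Q (bmod b) s n.+2 = 1.
Proof.
move=> hX s; have h1 := Pr_all hX s; have h2 := Pr_all hX (s - 1).
rewrite Pr_mk2 mk2_N1 in h1; rewrite Pr_mk2 mk2_N1 in h2.
case: (mk2_inj h1) => _ -> _ _; case: (mk2_inj h2) => _ _ _.
by rewrite subrK => /eqP; rewrite eqr_opp => /eqP.
Qed.

Lemma X_chart (b : 'I_N -> C) : inX b -> forall j,
  bmod b (j + n.+2%:Z) = Q (bmod b) (j+1) n.+1 /\ bmod b j = Q (bmod b) (j+2) n.+1.
Proof.
move=> hX j; have [h1 _] := X_Q hX (j+1); have [_ h2] := X_Q hX (j+1).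
have [h3 _] := X_Q hX j.
split.
  move: h1; rewrite QSS h2 mul1r.
  have -> : j + 1 + n.+1%:Z = j + n.+2%:Z by lia.
  by move/eqP; rewrite subr_eq0 => /eqP.
move: h3; rewrite Q_left h2 mulr1.
by move/eqP; rewrite subr_eq0 => /eqP.
Qed.

Lemma chart_Pr a j : Q a (j+1) n.+2 = 1 -> a (j + n.+2%:Z) = Q a (j+1) n.+1 ->
  a j = Q a (j+2) n.+1 -> Pr a j = -1.
Proof.
move=> h1 h2 h3.
rewrite /Pr big_ord_recl big_ord_recr /= addr0.
have -> : \prod_(i < n.+1) Nm (a (j + (bump 0 (widen_ord (leqnSn n.+1) i))%:Z))
   = \prod_(t < n.+1) Nm (a ((j + 1) + t%:Z)).
  by apply: eq_bigr => t _; congr (Nm (a _)); rewrite /bump /=; lia.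
rewrite prod_Nm.
have -> : (j + (bump 0 (@ord_max n.+1))%:Z) = j + n.+2%:Z by rewrite /bump /=; lia.
have e : j + 1 + 1 = j + 2 by lia.
have D := Q_desnanot a (j+1) n.
rewrite e in D; rewrite e.
rewrite h1 mul1r in D.
rewrite h2 h3 h1 /Nm !mk2_mul mk2_N1.
have -> : Q a (j+2) n = Q a (j + 1) n.+1 * Q a (j + 2) n.+1 - 1 by rewrite D addrK.
congr mk2; ring.
Qed.

Lemma Pc_Q (a : int -> C) s r : Pc (fun j : nat => a (s + j%:Z - 1)) r = Q a s r.+1.
Proof.
suff: Pc (fun j : nat => a (s + j%:Z - 1)) r = Q a s r.+1 /\
      Pc (fun j : nat => a (s + j%:Z - 1)) r.+1 = Q a s r.+2 by case.
elim: r => [|r [h1 h2]]; first by rewrite /= addrK addr0 mul1r subr0.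
split=> //.
rewrite QSS -h1 -h2 /=.
by have -> : s + r.+2%:Z - 1 = s + r.+1%:Z by lia.
Qed.

Lemma Tof_Q (b : 'I_N -> C) (i : nat) s : Tof b i (i%:Z + 2 * s) = Q (bmod b) s i.+1.
Proof.
rewrite /Tof.
have -> : ((i%:Z + 2 * s - i%:Z) %/ 2)%Z = s by rewrite addrC addKr mulKz.
exact: Pc_Q.
Qed.

Lemma even_ex i k : evenik i k -> exists s, k = i%:Z + 2 * s.
Proof.
rewrite /evenik => /dvdzP [q hq]; exists (q - i%:Z); lia.
Qed.

Lemma evenik_of i s : evenik i (i%:Z + 2 * s).
Proof. by rewrite /evenik; apply/dvdzP; exists (i%:Z + s); lia. Qed.

Lemma Q_eqfun (a a' : int -> C) s k : a =1 a' -> Q a s k = Q a' s k.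
Proof. by move=> e; apply: Q_ext => t _; apply: e. Qed.

Lemma part_i (b : 'I_N -> C) : inX b -> Tsystem n.+1 (Tof b).
Proof.
move=> hX; split; first by [].
split.
  move=> k /even_ex [s ->]; rewrite Tof_Q; by case: (X_Q hX s).
move=> i k hi1 hin /even_ex [s ->].
case: i hi1 hin => [//|i] _ hin.
have -> : i.+2%:Z + 2 * s - 1 = i.+1%:Z + 2 * s by lia.
have -> : i.+2%:Z + 2 * s + 1 = i.+1%:Z + 2 * (s + 1) by lia.
have e3 : i.+2%:Z + 2 * s = i%:Z + 2 * (s + 1) by lia.
rewrite /= {1}e3 !Tof_Q (Q_desnanot (bmod b) s i.+1); ring.
Qed.

Lemma per_mod (a : int -> C) : (forall x, a (x + N%:Z) = a x) -> forall x, a x = a (x %% N%:Z)%Z.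
Proof.
move=> per.
have P1 : forall (k : nat) y, a (y + k%:Z * N%:Z) = a y.
  elim=> [|k IH] y; first by rewrite mul0r addr0.
  by rewrite (_ : y + k.+1%:Z * N%:Z = (y + k%:Z * N%:Z) + N%:Z) ?per ?IH //; lia.
have P2 : forall (k : nat) y, a (y - k%:Z * N%:Z) = a y.
  move=> k y; rewrite -(P1 k (y - k%:Z * N%:Z)); congr a; ring.
move=> x; rewrite {1}(divz_eq x N%:Z).
case: (x %/ N%:Z)%Z => k.
  by rewrite addrC P1.
by rewrite NegzE mulNr addrC P2.
Qed.

Lemma part_ii (T : nat -> int -> C) : Tsystem n.+1 T -> nonvanishing n.+1 T ->
  exists b : 'I_N -> C,
    [/\ inX b, Tagree n.+1 T (Tof b) &
        forall b' : 'I_N -> C, inX b' -> Tagree n.+1 T (Tof b') -> forall j, b' j = b j].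
Proof.
move=> [T0 [Tm Trel]] nv.
pose a x := T 1%N (1%:Z + 2 * x).
have A : forall i, (i <= n.+1)%N -> forall s, T i (i%:Z + 2 * s) = Q a s i.+1.
  suff: forall i, (i.+1 <= n.+1)%N -> (forall s, T i (i%:Z + 2 * s) = Q a s i.+1) /\
                                   (forall s, T i.+1 (i.+1%:Z + 2 * s) = Q a s i.+2).
    move=> H [|i] hi; first by case: (H 0%N isT).
    by case: (H i hi).
  elim=> [|i IH] hi.
    split=> s; first by rewrite T0 // evenik_of.
    by rewrite /= /a addr0 mul1r subr0.
  have [h1 h2] := IH (ltnW hi).
  split=> // s.
  have R1 := Trel i.+1 (i.+2%:Z + 2 * s) isT (ltac:(lia)) (evenik_of _ _).
  have e1 : i.+2%:Z + 2 * s - 1 = i.+1%:Z + 2 * s by lia.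
  have e2 : i.+2%:Z + 2 * s + 1 = i.+1%:Z + 2 * (s + 1) by lia.
  have e3 : i.+2%:Z + 2 * s = i%:Z + 2 * (s + 1) by lia.
  rewrite e1 e2 /= !h2 {1}e3 h1 Q_desnanot in R1.
  have nz : Q a (s + 1) i.+1 != 0.
    by rewrite -h1; apply: nv; [lia | exact: evenik_of].
  apply: (mulfI nz); move/addIr: R1 => <-; ring.
have Qm : forall s, Q a s n.+2 = 1.
  by move=> s; rewrite -A // Tm // evenik_of.
have Qnz : forall s, Q a s n.+1 != 0.
  by move=> s; rewrite -A //; apply: nv => //; exact: evenik_of.
have Q0 : forall s, Q a s n.+3 = 0.
  move=> s; have D := Q_desnanot a s n.+1.
  rewrite !Qm mul1r -{1}(add0r 1) in D; move/addIr: D => D.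
  by apply/eqP; rewrite -(mulIr_eq0 _ (mulIf (Qnz (s+1)))) -D.
have C1 : forall j, a (j + n.+2%:Z) = Q a (j+1) n.+1.
  move=> j; have := Q0 (j+1); rewrite QSS Qm mul1r.
  have -> : j + 1 + n.+1%:Z = j + n.+2%:Z by lia.
  by move/eqP; rewrite subr_eq0 => /eqP.
have C2 : forall j, a j = Q a (j+2) n.+1.
  by move=> j; have := Q0 j; rewrite Q_left Qm mulr1 => /eqP; rewrite subr_eq0 => /eqP.
have per : forall x, a (x + N%:Z) = a x.
  move=> x; rewrite [RHS]C2 (_ : x + N%:Z = (x + 1) + n.+2%:Z); last by lia.
  by rewrite C1 (_ : x + 1 + 1 = x + 2) //; lia.
pose b (r : 'I_N) := a r%:Z.
have ba : forall x, bmod b x = a x.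
  move=> x; rewrite /bmod /b (per_mod per x); congr a.
  have h : (0 <= (x %% N%:Z)%Z) by rewrite modz_ge0.
  rewrite inordK; first by rewrite gez0_abs.
  have := ltz_pmod x (isT : (0 < N%:Z)); lia.
exists b; split.
- apply/inX_Pr; rewrite /Pr.
  have -> : \prod_(t < N) Nm (bmod b (0 + t%:Z)) = Pr a 0.
    by apply: eq_bigr => t _; rewrite ba.
  by apply: chart_Pr; rewrite ?Qm ?C1 ?C2 //; rewrite add0r.
- move=> i k hi /even_ex [s ->]; rewrite Tof_Q A //; exact: Q_eqfun.
- move=> b' hX' ag j.
  have := ag 1%N (1%:Z + 2 * j%:Z) isT (evenik_of _ _).
  rewrite Tof_Q /= addr0 mul1r subr0 bmodE => <-.
  by rewrite /b /a.
Qed.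

End CX.


Section Good.
Variable R : realType.
Local Notation C := (R[i]).
Variable n : nat.
Local Notation N := n.+3.

Lemma prim_ex k : (k > 0)%N -> {z : C | k.-primitive_root z}.
Proof.
pose p : {poly C} := 'X^k - 1; have [r Dp] := closed_field_poly_normal p.
move=> k_gt0; apply/sigW; rewrite (monicP _) ?monicXnsubC // scale1r in Dp.
have rn1: all k.-unity_root r by apply/allP=> z; rewrite -root_prod_XsubC -Dp.
have sz_r: (k < (size r).+1)%N.
  by rewrite -(size_prod_XsubC r id) -Dp size_XnsubC.
have [|z] := hasP (has_prim_root k_gt0 rn1 _ sz_r); last by exists z.
by rewrite -separable_prod_XsubC -Dp separable_Xn_sub_1 // pnatr_eq0 -lt0n.
Qed.

Lemma N2_gt0 : (0 < 2 * N)%N. Proof. by rewrite muln_gt0. Qed.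

Definition zeta : C := sval (prim_ex N2_gt0).
Lemma zeta_prim : (2 * N).-primitive_root zeta.
Proof. exact: (svalP (prim_ex N2_gt0)). Qed.

Local Notation z := zeta.

Lemma z2N : z ^+ (2 * N) = 1.
Proof. exact: prim_expr_order zeta_prim. Qed.

Lemma z_neq0 : z != 0.
Proof.
apply/eqP => h; have := z2N; rewrite h expr0n muln_eq0 /= => /eqP.
by rewrite eq_sym oner_eq0.
Qed.

Lemma z_ne k : (0 < k < N)%N -> z ^+ (2 * k) != 1.
Proof.
move=> /andP [k0 kN]; rewrite -(prim_order_dvd zeta_prim) dvdn_pmul2l //.
by apply/negP => /(dvdn_leq k0); rewrite leqNgt kN.
Qed.

Lemma zN : z ^+ N = -1.
Proof.
have : (z ^+ N) ^+ 2 == 1 by rewrite -exprM mulnC z2N.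
rewrite sqrf_eq1 => /orP [|/eqP //].
rewrite -(prim_order_dvd zeta_prim) => /(dvdn_leq (isT : (0 < N)%N)) h.
exfalso; lia.
Qed.

Definition beta : C := z + z^-1.

Lemma zbeta : z * beta = z ^+ 2 + 1.
Proof. by rewrite /beta mulrDr mulfV ?z_neq0 // expr2. Qed.

Lemma cheb s k : z ^+ k * (z ^+ 2 - 1) * Q (fun _ => beta) s k = z * (z ^+ (2 * k) - 1).
Proof.
suff: z ^+ k * (z ^+ 2 - 1) * Q (fun _ => beta) s k = z * (z ^+ (2 * k) - 1) /\
      z ^+ k.+1 * (z ^+ 2 - 1) * Q (fun _ => beta) s k.+1 = z * (z ^+ (2 * k.+1) - 1) by case.
elim: k => [|k [h1 h2]].
  by rewrite /= mulr0 muln0 expr0 subrr mulr0 expr1 mulr1 muln1.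
split=> //.
move: h1 h2; set A := Q _ s k; set B := Q _ s k.+1 => h1 h2.
rewrite QSS -/A -/B.
have e1 : (2 * k.+1 = 2 * k + 2)%N by lia.
have e2 : (2 * k.+2 = 2 * k + 4)%N by lia.
rewrite e1 in h2; rewrite e2.
have -> : z ^+ k.+2 * (z ^+ 2 - 1) * (B * beta - A) =
   (z * beta) * (z ^+ k.+1 * (z ^+ 2 - 1) * B) - z ^+ 2 * (z ^+ k * (z ^+ 2 - 1) * A).
  rewrite !exprS; ring.
rewrite h1 h2 zbeta !exprD; ring.
Qed.

Lemma Qbeta_nz s k : (0 < k < N)%N -> Q (fun _ => beta) s k != 0.
Proof.
move=> hk; apply/negP => /eqP h; have := cheb s k; rewrite h mulr0 => /esym /eqP.
rewrite mulf_eq0 (negbTE z_neq0) /= subr_eq0; apply/negP; exact: z_ne.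
Qed.

Lemma z2m1 : z ^+ 2 - 1 != 0.
Proof. by rewrite subr_eq0; have := @z_ne 1%N isT; rewrite muln1. Qed.

Lemma QbetaN s : Q (fun _ => beta) s N = 0.
Proof.
have := cheb s N; rewrite z2N subrr mulr0 => /eqP.
rewrite mulf_eq0 => /orP[|/eqP //]; rewrite mulf_eq0 => /orP[].
  by rewrite expf_eq0 (negbTE z_neq0) andbF.
by rewrite (negbTE z2m1).
Qed.

Lemma QbetaN1 s : Q (fun _ => beta) s N.+1 = -1.
Proof.
have : z * (- ((z ^+ 2 - 1) * Q (fun _ => beta) s N.+1)) = z * (z ^+ (2 * N.+1) - 1).
  by rewrite -(cheb s N.+1) (exprS z N) zN; ring.
rewrite mulnS exprD z2N mulr1 => h2.
have h3 := mulfI z_neq0 h2.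
by apply: (mulfI z2m1); rewrite mulrN1; apply: oppr_inj; rewrite opprK h3.
Qed.

Lemma QbetaNm1 s : Q (fun _ => beta) s n.+2 = 1.
Proof.
have h : z * (z ^+ n.+2 * (z ^+ 2 - 1) * Q (fun _ => beta) s n.+2) =
    z * (z * (z ^+ (2 * n.+2) - 1)) by rewrite cheb.
have e1 : z * (z ^+ n.+2 * (z ^+ 2 - 1) * Q (fun _ => beta) s n.+2)
   = - ((z ^+ 2 - 1) * Q (fun _ => beta) s n.+2).
  have hzw : z * z ^+ n.+2 = -1 by rewrite -exprS zN.
  move: hzw; set w := z ^+ n.+2 => hzw.
  set A := z ^+ 2 - 1; set QQ := Q _ s n.+2.
  have -> : z * (w * A * QQ) = (z * w) * (A * QQ) by ring.
  by rewrite hzw mulN1r.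
have e2 : z * (z * (z ^+ (2 * n.+2) - 1)) = 1 - z ^+ 2.
  have -> : (1 : C) - z ^+ 2 = z ^+ (2 * N) - z ^+ 2 by rewrite z2N.
  rewrite (_ : (2 * N = 2 + 2 * n.+2)%N); last by lia.
  rewrite exprD; set w := z ^+ (2 * n.+2); ring.
rewrite e1 e2 in h.
apply: (mulfI z2m1); rewrite mulr1; apply: oppr_inj; rewrite h; ring.
Qed.

End Good.


Section Dens.
Variable R : realType.
Local Notation C := (R[i]).
Variable n : nat.
Local Notation N := n.+3.

Definition Xv (p : int) : {mpoly C[N]} := 'X_(inord `|(p %% N%:Z)%Z|%N).

Definition fpoly : {mpoly C[N]} := \prod_(i < n) \prod_(s < N) Q Xv (s%:Z) i.+2.

Lemma feval (b : 'I_N -> C) :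
  fpoly.@[b] = \prod_(i < n) \prod_(s < N) Q (bmod b) (s%:Z) i.+2.
Proof.
rewrite /fpoly rmorph_prod; apply: eq_bigr => i _.
rewrite rmorph_prod; apply: eq_bigr => s _.
rewrite (Q_morph (meval b)); apply: Q_eqfun => p /=; by rewrite mevalXU.
Qed.

Lemma Q_mod (b : 'I_N -> C) s k : Q (bmod b) s k = Q (bmod b) (s %% N%:Z)%Z k.
Proof.
rewrite -[s in LHS]add0r -[(s %% _)%Z]add0r -!Q_shift; apply: Q_eqfun => p.
by rewrite [p + s]addrC [p + _]addrC bmod_shift.
Qed.

Lemma f_nv (b : 'I_N -> C) : inX b -> fpoly.@[b] != 0 -> nonvanishing n.+1 (Tof b).
Proof.
move=> hX; rewrite feval => /prodf_neq0 H i k hi /even_ex [s ->].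
rewrite Tof_Q.
case: i hi => [|i] hi; first by rewrite oner_eq0.
case: (ltnP i n) => hin; last first.
  have -> : i = n by lia.
  by case: (X_Q hX s) => _ ->; rewrite oner_eq0.
rewrite Q_mod.
have h0 : (0 <= (s %% N%:Z)%Z) by rewrite modz_ge0.
have h1 : ((s %% N%:Z)%Z < N%:Z) by rewrite ltz_pmod.
move: h0 h1; case: (s %% N%:Z)%Z => [k' _ hk'|//].
have hk : (k' < N)%N by lia.
have := H (Ordinal hin) isT => /prodf_neq0 /(_ (Ordinal hk) isT).
done.
Qed.

Definition bstar : 'I_N -> C := fun _ => beta R n.

Lemma bmod_bstar x : bmod bstar x = beta R n.
Proof. by []. Qed.

Lemma inX_bstar : inX bstar.
Proof.
apply/inX_Pr; rewrite Pr_mk2 mk2_N1 !(@Q_eqfun _ _ (fun _ => beta R n)) //.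
by rewrite QbetaN1 !QbetaN QbetaNm1 ?oppr0.
Qed.

Lemma f_bstar : fpoly.@[bstar] != 0.
Proof.
rewrite feval; apply/prodf_neq0 => i _; apply/prodf_neq0 => s _.
rewrite (@Q_eqfun _ _ (fun _ => beta R n)) //; apply: Qbeta_nz.
by apply/andP; split=> //; rewrite !ltnS ltnW.
Qed.

End Dens.

Section Rat.
Variable R : realType.
Local Notation C := (R[i]).
Variable q : {poly C}.

Definition Rat (F : C -> C) := exists (P : {poly C}) (k : nat),
  forall t, q.[t] != 0 -> F t = P.[t] / q.[t] ^+ k.

Lemma Rat_ext F G : Rat F -> (forall t, q.[t] != 0 -> F t = G t) -> Rat G.
Proof. by move=> [P [k H]] e; exists P, k => t ht; rewrite -e // H. Qed.

Lemma Rat_poly P : Rat (fun t => P.[t]).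
Proof. by exists P, 0%N => t _; rewrite expr0 divr1. Qed.

Lemma Rat_const c : Rat (fun _ => c).
Proof. by apply: (Rat_ext (Rat_poly c%:P)) => t _; rewrite hornerC. Qed.

Lemma Rat_add F G : Rat F -> Rat G -> Rat (fun t => F t + G t).
Proof.
move=> [P1 [k1 H1]] [P2 [k2 H2]].
exists (P1 * q ^+ k2 + P2 * q ^+ k1), (k1 + k2)%N => t ht.
rewrite H1 // H2 // ?hornerD !hornerM ?horner_exp exprD.
have h1 : q.[t] ^+ k1 != 0 by rewrite expf_neq0.
have h2 : q.[t] ^+ k2 != 0 by rewrite expf_neq0.
by field; rewrite ?h1 ?h2 ?ht.
Qed.

Lemma Rat_opp F : Rat F -> Rat (fun t => - F t).
Proof.
move=> [P [k H]]; exists (- P), k => t ht; rewrite H // !hornerE; by rewrite mulNr.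
Qed.

Lemma Rat_mul F G : Rat F -> Rat G -> Rat (fun t => F t * G t).
Proof.
move=> [P1 [k1 H1]] [P2 [k2 H2]].
exists (P1 * P2), (k1 + k2)%N => t ht.
rewrite H1 // H2 // ?hornerD !hornerM ?horner_exp exprD.
have h1 : q.[t] ^+ k1 != 0 by rewrite expf_neq0.
have h2 : q.[t] ^+ k2 != 0 by rewrite expf_neq0.
by field; rewrite ?h1 ?h2 ?ht.
Qed.

Lemma Rat_divq F : Rat F -> Rat (fun t => F t / q.[t]).
Proof.
move=> [P [k H]]; exists P, k.+1 => t ht.
rewrite H // exprS.
have h1 : q.[t] ^+ k != 0 by rewrite expf_neq0.
by field; rewrite ?h1 ?h2 ?ht.
Qed.

Lemma Rat_exp F k : Rat F -> Rat (fun t => F t ^+ k).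
Proof.
move=> hF; elim: k => [|k IH]; first exact: Rat_const.
by apply: (Rat_ext (Rat_mul hF IH)) => t _; rewrite exprS.
Qed.

Lemma Rat_sum (I : Type) (r : seq I) (P : pred I) (F : I -> C -> C) :
  (forall i, Rat (F i)) -> Rat (fun t => \sum_(i <- r | P i) F i t).
Proof.
move=> hF; elim: r => [|i r IH].
  by apply: (Rat_ext (Rat_const 0)) => t _; rewrite big_nil.
case: (boolP (P i)) => Pi.
  by apply: (Rat_ext (Rat_add (hF i) IH)) => t _; rewrite big_cons Pi.
by apply: (Rat_ext IH) => t _; rewrite big_cons (negbTE Pi).
Qed.

Lemma Rat_prod (I : Type) (r : seq I) (P : pred I) (F : I -> C -> C) :
  (forall i, Rat (F i)) -> Rat (fun t => \prod_(i <- r | P i) F i t).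
Proof.
move=> hF; elim: r => [|i r IH].
  by apply: (Rat_ext (Rat_const 1)) => t _; rewrite big_nil.
case: (boolP (P i)) => Pi.
  by apply: (Rat_ext (Rat_mul (hF i) IH)) => t _; rewrite big_cons Pi.
by apply: (Rat_ext IH) => t _; rewrite big_cons (negbTE Pi).
Qed.

Lemma Rat_Q (a : C -> int -> C) s k : (forall p, Rat (fun t => a t p)) ->
  Rat (fun t => Q (a t) s k).
Proof.
move=> ha.
suff: Rat (fun t => Q (a t) s k) /\ Rat (fun t => Q (a t) s k.+1) by case.
elim: k => [|k [h1 h2]]; first by split; apply: Rat_const.
split=> //.
exact: (Rat_add (Rat_mul h2 (ha _)) (Rat_opp h1)).
Qed.

Lemma Rat_meval k (v : C -> 'I_k -> C) (g : {mpoly C[k]}) :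
  (forall i, Rat (fun t => v t i)) -> Rat (fun t => g.@[v t]).
Proof.
move=> hv; apply: (Rat_ext (F := fun t => \sum_(m <- msupp g) g@_m * \prod_i v t i ^+ m i)).
  apply: Rat_sum => m; apply: Rat_mul; first exact: Rat_const.
  by apply: Rat_prod => i; apply: Rat_exp.
by move=> t _; rewrite mevalE.
Qed.

End Rat.

Lemma poly_zero (R : realType) (p : {poly R[i]}) : (forall x, p.[x] = 0) -> p = 0.
Proof.
move=> H; apply/eqP; apply: contraT => nz.
have := max_poly_roots nz (rs := [seq i%:R | i <- iota 0 (size p)]).
rewrite size_map size_iota ltnn; apply.
  by apply/allP => x /mapP [i _ ->]; apply/eqP; apply: H.
rewrite map_inj_uniq ?iota_uniq // => i j /eqP; rewrite eqr_nat => /eqP.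
done.
Qed.

Lemma core_zero (R : realType) (q : {poly R[i]}) G H t0 t1 : Rat q G -> Rat q H ->
  (forall t, q.[t] != 0 -> G t * H t = 0) -> q.[t1] != 0 -> H t1 != 0 ->
  q.[t0] != 0 -> G t0 = 0.
Proof.
move=> [PG [a hG]] [PH [b hH]] GH q1 H1 q0.
have Z : PG * PH * q = 0.
  apply: poly_zero => t; rewrite !hornerE.
  case: (boolP (q.[t] == 0)) => [/eqP -> | qt]; first by rewrite mulr0.
  have := GH t qt; rewrite hG // hH // => e.
  have ha : q.[t] ^+ a != 0 by rewrite expf_neq0.
  have hb : q.[t] ^+ b != 0 by rewrite expf_neq0.
  have -> : PG.[t] * PH.[t] = (PG.[t] / q.[t] ^+ a * (PH.[t] / q.[t] ^+ b)) * (q.[t] ^+ a * q.[t] ^+ b).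
    by field; rewrite ?ha ?hb ?qt.
  by rewrite e !mul0r.
have PHnz : PH != 0.
  apply/eqP => h; move: H1; rewrite hH // h hornerE mul0r eqxx //.
have qnz : q != 0 by apply/eqP => h; move: q0; rewrite h hornerE eqxx.
move/eqP: Z; rewrite !mulf_eq0 (negbTE PHnz) (negbTE qnz) !orbF => /eqP PG0.
by rewrite hG // PG0 hornerE mul0r.
Qed.


Section Chart.
Variable R : realType.
Local Notation C := (R[i]).
Variable n : nat.
Local Notation N := n.+3.

Definition ptj (j : int) (d : int -> C) : 'I_N -> C :=
  fun r => d (j + ((r%:Z - j) %% N%:Z)%Z).

Lemma bmod_ptj j d (u : int) : 0 <= u -> u < N%:Z -> bmod (ptj j d) (j + u) = d (j + u).
Proof.
move=> u0 uN; rewrite /bmod /ptj.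
have h0 : 0 <= ((j + u) %% N%:Z)%Z by rewrite modz_ge0.
have h1 : ((j + u) %% N%:Z)%Z < N%:Z by rewrite ltz_pmod.
rewrite inordK; last by lia.
rewrite gez0_abs //.
rewrite modzDml (_ : j + u + - j = u); last by ring.
by rewrite modz_small ?u0.
Qed.

Lemma ptj_bmod j (b : 'I_N -> C) : ptj j (bmod b) =1 b.
Proof.
move=> r; rewrite /ptj -bmod_mod modzDmr (_ : j + (r%:Z - j) = r%:Z); last by ring.
by rewrite bmod_mod bmodE.
Qed.

Lemma Pr_ptj j d : Pr n (bmod (ptj j d)) j = Pr n d j.
Proof. by apply: eq_bigr => t _; move: (ltn_ord t) => ht; rewrite bmod_ptj //; lia. Qed.

Lemma Pr_mod (b : 'I_N -> C) x : Pr n (bmod b) x = Pr n (bmod b) (x %% N%:Z)%Z.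
Proof. by apply: eq_bigr => t _; rewrite bmod_shift. Qed.

Lemma Pr_any (b : 'I_N -> C) j : Pr n (bmod b) j = -1 -> inX b.
Proof.
move=> H.
have F : forall d : nat, Pr n (bmod b) (j + d%:Z) = -1.
  elim=> [|d IH]; first by rewrite addr0.
  rewrite (_ : j + d.+1%:Z = (j + d%:Z) + 1); last by lia.
  by apply: Pr_rot => //; apply: bmod_per.
apply/inX_Pr.
have h0 : 0 <= (j %% N%:Z)%Z by rewrite modz_ge0.
have h1 : (j %% N%:Z)%Z < N%:Z by rewrite ltz_pmod.
have := F `|N%:Z - (j %% N%:Z)%Z|%N; rewrite gez0_abs; last by lia.
rewrite Pr_mod => <-; rewrite (Pr_mod _ 0); congr (Pr n).
rewrite {1}(divz_eq j N%:Z).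
have -> : (j %/ N%:Z)%Z * N%:Z + (j %% N%:Z)%Z + (N%:Z - (j %% N%:Z)%Z) = ((j %/ N%:Z)%Z + 1) * N%:Z by ring.
by rewrite modzMl.
Qed.

Definition eseq (j : int) (x : int -> C) (p : int) : C :=
  if p == j + n.+1%:Z then (1 + Q x (j+1) n) / Q x (j+1) n.+1 else x p.

Definition dseq (j : int) (x : int -> C) (p : int) : C :=
  if p == j then Q (eseq j x) (j+2) n.+1
  else if p == j + n.+2%:Z then Q x (j+1) n.+1 else eseq j x p.

Lemma chart_inX j x : Q x (j+1) n.+1 != 0 -> inX (ptj j (dseq j x)).
Proof.
move=> hq; apply: (Pr_any (j := j)); rewrite Pr_ptj.
have E1 : forall k : nat, (k <= n)%N -> dseq j x (j + 1 + k%:Z) = eseq j x (j + 1 + k%:Z).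
  move=> k hk; rewrite /dseq; case: eqP => [?|_]; first lia.
  by case: eqP => [?|_] //; lia.
have E2 : forall k : nat, (k < n)%N -> eseq j x (j + 1 + k%:Z) = x (j + 1 + k%:Z).
  by move=> k hk; rewrite /eseq; case: eqP => [?|_] //; lia.
apply: chart_Pr.
- rewrite (@Q_ext _ _ (eseq j x)); last by move=> k hk; apply: E1; lia.
  rewrite QSS (@Q_ext _ (eseq j x) x); last by move=> k hk; apply: E2; lia.
  rewrite (@Q_ext _ (eseq j x) x _ n); last by move=> k hk; apply: E2; lia.
  rewrite /eseq (_ : j + 1 + n%:Z = j + n.+1%:Z); last by lia.
  rewrite eqxx mulrC divfK //; ring.
- have -> : dseq j x (j + n.+2%:Z) = Q x (j+1) n.+1.
    by rewrite /dseq; case: eqP => [?|_]; [lia | rewrite eqxx].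
  apply: Q_ext => k hk; rewrite E1; last by lia.
  by rewrite E2 //; lia.
- have -> : dseq j x j = Q (eseq j x) (j+2) n.+1 by rewrite /dseq eqxx.
  apply: Q_ext => k hk; rewrite /dseq.
  case: eqP => [?|_]; first lia.
  by case: eqP => [?|_] //; lia.
Qed.

Lemma eseq_eq j x x' : x =1 x' -> eseq j x =1 eseq j x'.
Proof. by move=> e p; rewrite /eseq !(Q_eqfun _ _ e) e. Qed.

Lemma dseq_eq j x x' : x =1 x' -> dseq j x =1 dseq j x'.
Proof.
move=> e p; rewrite /dseq (Q_eqfun _ _ (eseq_eq j e)) (Q_eqfun _ _ e).
by rewrite (eseq_eq j e).
Qed.

Lemma chart_recover j (w : 'I_N -> C) : inX w ->
  Q (bmod w) (j+1) n.+1 != 0 -> dseq j (bmod w) =1 bmod w.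
Proof.
move=> hX hq.
have Ee : eseq j (bmod w) =1 bmod w.
  move=> p; rewrite /eseq; case: eqP => [->|//].
  have [_ h] := X_Q hX (j+1).
  move: h; rewrite QSS (_ : j + 1 + n%:Z = j + n.+1%:Z); last by lia.
  move=> h; apply: (mulfI hq); rewrite mulrC divfK //.
  by rewrite -h; ring.
move=> p; rewrite /dseq (Q_eqfun _ _ Ee).
have [c1 c2] := X_chart hX j.
case: eqP => [->|_]; first by rewrite c2.
by case: eqP => [->|_]; [rewrite c1 | rewrite Ee].
Qed.

End Chart.


Section Dense.
Variable R : realType.
Local Notation C := (R[i]).
Variable n : nat.
Local Notation N := n.+3.

Lemma ptj_recover j (w : 'I_N -> C) x : inX w -> Q (bmod w) (j+1) n.+1 != 0 ->
  x =1 bmod w -> ptj (n:=n) j (dseq n j x) =1 w.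
Proof.
move=> hX hq e r; rewrite /ptj (dseq_eq n j e) chart_recover //.
exact: ptj_bmod.
Qed.

Lemma chart_dense (g : {mpoly C[N]}) :
  (forall b : 'I_N -> C, inX b -> (fpoly R n).@[b] != 0 -> g.@[b] = 0) ->
  forall (b : 'I_N -> C) j, inX b -> Q (bmod b) (j+1) n.+1 != 0 -> g.@[b] = 0.
Proof.
move=> Hg b j hX hq.
pose a0 := bmod b.
pose lin (p : int) : {poly C} := (a0 p)%:P + (beta R n - a0 p)%:P * 'X.
pose xt (t : C) (p : int) := (lin p).[t].
pose q : {poly C} := Q lin (j+1) n.+1.
have hqt : forall t, q.[t] = Q (xt t) (j+1) n.+1.
  move=> t; rewrite -horner_evalE (Q_morph (horner_eval t)); apply: Q_eqfun => p.
  by [].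
have x0 : xt 0 =1 a0 by move=> p; rewrite /xt /lin !hornerE; ring.
have x1 : xt 1 =1 bmod (bstar R (n:=n)).
  by move=> p; rewrite /xt /lin hornerD hornerM !hornerC hornerX mulr1 bmod_bstar addrC subrK.
have q0 : q.[0] != 0 by rewrite hqt (Q_eqfun _ _ x0).
have eb : bmod (bstar R (n:=n)) =1 (fun _ => beta R n) by [].
have q1 : q.[1] != 0.
  rewrite hqt (Q_eqfun _ _ x1) (Q_eqfun _ _ eb); apply: Qbeta_nz; lia.
pose v (t : C) : 'I_N -> C := ptj (n:=n) j (dseq n j (xt t)).
have Rv : forall r, Rat q (fun t => v t r).
  move=> r; rewrite /v /ptj.
  move: (j + _) => p.
  have Rx : forall p', Rat q (fun t => xt t p') by move=> p'; apply: Rat_poly.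
  have Re : forall p', Rat q (fun t => eseq n j (xt t) p').
    move=> p'; rewrite /eseq; case: eqP => _; last exact: Rx.
    apply: (Rat_ext (F := fun t => (1 + Q (xt t) (j+1) n) / q.[t])).
      by apply: Rat_divq; apply: Rat_add; [apply: Rat_const | apply: Rat_Q].
    by move=> t _; rewrite hqt.
  rewrite /dseq; case: eqP => _; first exact: Rat_Q.
  by case: eqP => _; [apply: Rat_Q | apply: Re].
pose G t := g.@[v t].
pose H t := (fpoly R n).@[v t].
have RG : Rat q G by apply: Rat_meval.
have RH : Rat q H by apply: Rat_meval.
have GH : forall t, q.[t] != 0 -> G t * H t = 0.
  move=> t ht; have hXt : inX (v t) by apply: chart_inX; rewrite -hqt.
  case: (boolP (H t == 0)) => [/eqP -> | hH]; first by rewrite mulr0.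
  by rewrite /G Hg // mul0r.
have v1 : v 1 =1 bstar R (n:=n).
  apply: ptj_recover; [exact: inX_bstar | | exact: x1].
  by rewrite (Q_eqfun _ _ eb); apply: Qbeta_nz; lia.
have v0 : v 0 =1 b by apply: ptj_recover.
have H1 : H 1 != 0 by rewrite /H (meval_eq _ v1) f_bstar.
have := core_zero RG RH GH q1 H1 q0.
by rewrite /G (meval_eq _ v0).
Qed.

End Dense.

Section Fallback.
Variable R : realType.
Local Notation C := (R[i]).
Variable n' : nat.

Lemma fallback (g : {mpoly C[n'.+4]}) :
  (forall (b : 'I_n'.+4 -> C) j, inX b -> Q (bmod b) (j+1) n'.+2 != 0 -> g.@[b] = 0) ->
  forall b : 'I_n'.+4 -> C, inX b -> (forall s, Q (bmod b) s n'.+2 = 0) -> g.@[b] = 0.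
Proof.
move=> Hc b hX Hz.
pose a0 := bmod b.
have Qm1 : forall s, Q a0 s n'.+1 = -1.
  move=> s; have D := Q_desnanot a0 (s - 1) n'.+1.
  rewrite subrK !Hz mul0r (proj2 (X_Q hX (s - 1))) mul1r in D.
  by apply/eqP; rewrite -subr_eq0 opprK -D.
have [c1 c2] := X_chart hX 0.
pose au (u : C) (p : int) := if p == n'.+2%:Z then a0 p + u else if p == 0 then a0 p - u else a0 p.
have au_mid : forall u (p : int), 0 < p -> p <= n'.+1%:Z -> au u p = a0 p.
  move=> u p h1 h2; rewrite /au; case: eqP => [?|_]; first lia.
  by case: eqP => [?|_] //; lia.
have Q1 : forall u, Q (au u) 1 n'.+2 = Q a0 1 n'.+2.
  by move=> u; apply: Q_ext => k hk; apply: au_mid; lia.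
have Q1' : forall u, Q (au u) 1 n'.+1 = Q a0 1 n'.+1.
  by move=> u; apply: Q_ext => k hk; apply: au_mid; lia.
have Q2 : forall u, Q (au u) 2 n'.+2 = Q a0 2 n'.+2 - u.
  move=> u; rewrite (QSS (au u)) (QSS a0).
  have -> : Q (au u) 2 n'.+1 = Q a0 2 n'.+1 by apply: Q_ext => k hk; apply: au_mid; lia.
  have -> : Q (au u) 2 n' = Q a0 2 n' by apply: Q_ext => k hk; apply: au_mid; lia.
  have -> : au u (2 + n'%:Z) = a0 (2 + n'%:Z) + u.
    by rewrite /au (_ : 2 + n'%:Z = n'.+2%:Z) ?eqxx //; lia.
  rewrite Qm1; ring.
rewrite !add0r in c1 c2.
have inXu : forall u, inX (ptj (n := n'.+1) 0 (au u)).
  move=> u; apply: (Pr_any (j := 0)); rewrite Pr_ptj; apply: chart_Pr.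
  - rewrite add0r QSS Q1 Q1' Hz Qm1; ring.
  - rewrite !add0r Q1 /au (_ : n'.+3%:Z == n'.+2%:Z = false); last by apply/eqP; lia.
    rewrite (_ : n'.+3%:Z == 0 = false); last by apply/eqP; lia.
    by rewrite /a0 c1.
  - rewrite !add0r Q2 /au (_ : 0 == n'.+2%:Z = false); last by apply/eqP; lia.
    by rewrite eqxx /a0 -c2.
have nzu : forall u, u != 0 -> g.@[ptj (n := n'.+1) 0 (au u)] = 0.
  move=> u hu; apply: (Hc _ 1 (inXu u)).
  rewrite (_ : 1 + 1 = 2) //.
  rewrite (@Q_ext _ _ (au u)); last first.
    move=> k hk; rewrite (_ : 2 + k%:Z = 0 + (2 + k%:Z)); last by ring.
    by rewrite bmod_ptj //; lia.
  by rewrite Q2 Hz sub0r oppr_eq0.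
have Rv : forall r, Rat 1 (fun u => ptj (n := n'.+1) 0 (au u) r).
  move=> r; rewrite /ptj; move: (0 + _) => p; rewrite /au.
  case: eqP => _.
    by apply: (Rat_ext (Rat_add (Rat_const _ (a0 p)) (Rat_poly _ 'X))) => t _; rewrite hornerX.
  case: eqP => _; last exact: Rat_const.
  by apply: (Rat_ext (Rat_add (Rat_const _ (a0 p)) (Rat_opp (Rat_poly _ 'X)))) => t _; rewrite hornerX.
have RG : Rat 1 (fun u => g.@[ptj (n := n'.+1) 0 (au u)]) by apply: Rat_meval.
have RH : Rat 1 (fun u : C => u) by apply: (Rat_ext (Rat_poly _ 'X)) => t _; rewrite hornerX.
have GH : forall u : C, (1 : {poly C}).[u] != 0 -> g.@[ptj (n := n'.+1) 0 (au u)] * u = 0.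
  move=> u _; case: (boolP (u == 0)) => [/eqP -> | hu]; first by rewrite mulr0.
  by rewrite nzu // mul0r.
have h1 : (1 : {poly C}).[1] != 0 by rewrite hornerC oner_eq0.
have hv0 : ptj (n := n'.+1) 0 (au 0) =1 b.
  move=> r; rewrite /ptj; set p := (0 + _).
  have -> : au 0 p = a0 p.
    by rewrite /au; case: eqP => _; [rewrite addr0 | case: eqP => _ //; rewrite subr0].
  exact: ptj_bmod.
rewrite -(meval_eq _ hv0).
apply: (@core_zero R 1 _ _ 0 1 RG RH GH h1 (oner_neq0 _)).
by rewrite hornerC oner_eq0.
Qed.

End Fallback.

Lemma density (R : realType) (n : nat) (g : {mpoly R[i][n.+3]}) :
  (forall b : 'I_n.+3 -> R[i], inX b -> (fpoly R n).@[b] != 0 -> g.@[b] = 0) ->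
  forall b : 'I_n.+3 -> R[i], inX b -> g.@[b] = 0.
Proof.
move=> Hg b hX.
have Hc := chart_dense Hg.
case: (boolP [exists s : 'I_n.+3, Q (bmod b) (s%:Z) n.+1 != 0]).
  move=> /existsP [s hs]; apply: (Hc b (s%:Z - 1) hX); by rewrite subrK.
move=> /existsPn Hn.
have Hz : forall s, Q (bmod b) s n.+1 = 0.
  move=> s; rewrite Q_mod.
  have h0 : 0 <= (s %% n.+3%:Z)%Z by rewrite modz_ge0.
  have h1 : (s %% n.+3%:Z)%Z < n.+3%:Z by rewrite ltz_pmod.
  move: h0 h1; case: (s %% _)%Z => [k _ hk|//].
  have hk' : (k < n.+3)%N by lia.
  by have := Hn (Ordinal hk'); rewrite negbK => /eqP.
clear Hn; move: g Hg Hc b hX Hz; case: n => [|n'] g Hg Hc b hX Hz.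
  by move: (Hz 0) => /= /eqP; rewrite oner_eq0.
exact: (fallback Hc hX Hz).
Qed.

Unset Implicit Arguments.

Theorem proposition4p32 (R : realType) (m : nat) (hm : (1 <= m)%N) :
  (* (i) *)
  (forall b : 'I_m.+2 -> R[i], inX b -> Tsystem m (Tof b)) /\
  generic_on_X (fun b : 'I_m.+2 -> R[i] => nonvanishing m (Tof b)) /\
  (* (ii) *)
  (forall T : nat -> int -> R[i], Tsystem m T -> nonvanishing m T ->
     exists b : 'I_m.+2 -> R[i],
       [/\ inX b, Tagree m T (Tof b) &
           forall b' : 'I_m.+2 -> R[i], inX b' -> Tagree m T (Tof b') ->
             forall j, b' j = b j]).
Proof.
case: m hm => [//|n] _.
split; first by move=> b; apply: part_i.
split.
  exists (fpoly R n); split.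
    by move=> g Hg b hX; apply: (density Hg).
  by move=> b hX hf; apply: f_nv.
by move=> T hT hnv; apply: part_ii.
Qed.
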